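(* Let $n\ge 3$. The set $\mathbf{W}^{\ge 6}_{\mathrm{bf}}(n)$ is the unique maximal transition semigroup of a minimal DFA $\mathcal{D}_n$ of a bifix-free language (with the state conventions below) in which there are no colliding pairs of states.
   Context: A language is bifix-free if no word of it is a proper prefix or a proper suffix of another word of it. For a minimal complete DFA $\mathcal{D}_n$ of a bifix-free language with $n$ states the states are named $Q=\{0,\dots,n-1\}$ so that $0$ is initial, $n-1$ is the empty state and $n-2$ is the unique final state (quotient $\{\varepsilon\}$). Transformations act on the right, $q(st)=(qs)t$; the transition semigroup $T(n)$ is the semigroup of transformations of $Q$ induced by nonempty words. Let $Q_M=\{1,\dots,n-3\}$. An unordered pair $\{p,q\}$ of distinct states of $Q_M$ is colliding (in $T(n)$) if there is $t\in T(n)$ with $0t=p$ and $rt=q$ for some $r\in Q_M$. Let $\mathbf{B}_{\mathrm{bf}}(n)$ be the set of all transformations $t$ of $Q$ with $0\notin Qt$, $(n-1)t=n-1$, $(n-2)t=n-1$, and for all $j\ge1$, either $0t^j=n-1$ or $0t^j\ne qt^j$ for all $0<q<n-1$. Then $\mathbf{W}^{\ge 6}_{\mathrm{bf}}(n)=\{t\in\mathbf{B}_{\mathrm{bf}}(n)\mid 0t\in\{n-2,n-1\}$, or $0t\in Q_M$ and $qt\in\{n-2,n-1\}$ for all $q\in Q_M\}$. *)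

(* Defs.v *)
From mathcomp Require Import all_boot.
Set Implicit Arguments. Unset Strict Implicit. Unset Printing Implicit Defensive.

(* States of D_n are Q = 'I_n = {0,...,n-1}; 0 initial, n-1 empty state,
   n-2 unique final state.  A transformation of Q is a {ffun 'I_n -> 'I_n};
   transformations act on the right: q(st) = (qs)t. *)

Section Defs.
Variable n : nat.
Notation tr := {ffun 'I_n -> 'I_n}.

(* value of state number k (as a nat) under t; identity outside 0..n-1 *)
Definition img (t : tr) (k : nat) : nat :=
  if insub k is Some q then val (t q) else k.

Definition inQM (k : nat) : bool := (0 < k) && (k <= n - 3).

Definition inB (t : tr) : Prop :=
  [/\ forall q : 'I_n, val (t q) != 0,
      img t n.-1 = n.-1,
      img t (n - 2) = n.-1 &
      forall j, 0 < j ->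
        iter j (img t) 0 = n.-1 \/
        forall q : 'I_n, 0 < q < n.-1 -> iter j (img t) 0 <> iter j (img t) q].

Definition inW (t : tr) : Prop :=
  inB t /\
  ((img t 0 = n - 2 \/ img t 0 = n.-1) \/
   (inQM (img t 0) /\
    forall q : 'I_n, inQM q -> img t q = n - 2 \/ img t q = n.-1)).

Section DFA.
Variable A : finType.
Variable d : A -> tr.

Definition run (w : seq A) (q : 'I_n) : 'I_n := foldl (fun p a => d a p) q w.
Definition trans (w : seq A) : tr := [ffun q => run w q].

Definition inT (t : tr) : Prop := exists2 w : seq A, w != [::] & t = trans w.

Definition accepts (w : seq A) : Prop := img (trans w) 0 = n - 2.

Definition bifix_free : Prop :=
  (forall u v x, accepts u -> accepts v -> x != [::] -> v <> u ++ x) /\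
  (forall u v x, accepts u -> accepts v -> x != [::] -> v <> x ++ u).

Definition minimal_dfa : Prop :=
  (forall q : 'I_n, exists w, img (trans w) 0 = val q) /\
  (forall p q : 'I_n, p != q ->
     exists w, (val (run w p) == n - 2) != (val (run w q) == n - 2)).

(* state conventions: n-1 is the empty state, n-2 the final state with
   quotient {eps} *)
Definition state_conventions : Prop :=
  (forall (q : 'I_n) w, val q = n.-1 -> val (run w q) != n - 2) /\
  (forall (q : 'I_n) w, val q = n - 2 -> (val (run w q) == n - 2) = (w == [::])).

Definition bifix_free_min_dfa : Prop :=
  [/\ minimal_dfa, bifix_free & state_conventions].

Definition colliding (p q : nat) : Prop :=
  [/\ inQM p, inQM q, p != q &
      exists t, inT t /\ exists r, inQM r /\
        ((img t 0 = p /\ img t r = q) \/ (img t 0 = q /\ img t r = p))].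

Definition no_colliding_pairs : Prop := forall p q, ~ colliding p q.

End DFA.
End Defs.

(* Main.v *)
Require Import Defs.
From mathcomp Require Import all_boot.
From mathcomp Require Import zify.
Set Implicit Arguments. Unset Strict Implicit. Unset Printing Implicit Defensive.
Lemma imgE n (t : {ffun 'I_n -> 'I_n}) (q : 'I_n) : img t q = val (t q).
Proof. by rewrite /img valK. Qed.
Definition o0 m : 'I_m.+3 := ord0.
Definition oN1 m : 'I_m.+3 := ord_max.
Definition oN2 m : 'I_m.+3 := @Ordinal m.+3 m.+1 (leqnSn m.+2).
Lemma E2 m : m.+3 - 2 = m.+1. Proof. by rewrite !subSS subn0. Qed.
Lemma E3 m : m.+3 - 3 = m. Proof. by rewrite !subSS subn0. Qed.
Lemma img0 n (t : {ffun 'I_n.+1 -> 'I_n.+1}) : img t 0 = val (t ord0).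
Proof. exact: (imgE t ord0). Qed.

Lemma runE n (A : finType) (d : A -> {ffun 'I_n -> 'I_n}) a w q :
  run d (a :: w) q = run d w (d a q).
Proof. by []. Qed.

Lemma run_cat n (A : finType) (d : A -> {ffun 'I_n -> 'I_n}) u v q :
  run d (u ++ v) q = run d v (run d u q).
Proof. by rewrite /run foldl_cat. Qed.

Lemma iter_img n (A : finType) (d : A -> {ffun 'I_n -> 'I_n}) w j (q : 'I_n) :
  iter j (img (trans d w)) (val q) = val (run d (flatten (nseq j w)) q).
Proof.
elim: j q => [|j IH] q //.
rewrite iterSr imgE ffunE IH /= run_cat //.
Qed.

Lemma part2 m (A : finType) (d : A -> {ffun 'I_m.+3 -> 'I_m.+3}) :
  bifix_free_min_dfa d -> no_colliding_pairs d -> forall t, inT d t -> inW t.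
Proof.
move=> [[reach dist] [pref suff] [conv1 conv2]] nocol t [w wne ->].
have reach' : forall q, exists u, run d u (o0 m) = q.
  move=> q; have [u hu] := reach q; exists u; apply: val_inj.
  by rewrite -hu img0 ffunE.
have acc : forall u, accepts d u <-> run d u (o0 m) = oN2 m.
  move=> u; rewrite /accepts img0 ffunE E2; split => [h|->] //; exact: val_inj.
have empt : forall p, p != oN1 m -> exists u, run d u p = oN2 m.
  move=> p hp; have [u hu] := dist _ _ hp; exists u; apply: val_inj => /=.
  have h1 := conv1 (oN1 m) u erefl.
  by move: hu; rewrite (negbTE h1) E2; case: (val (run d u p) =P m.+1).
have conv1' : forall u, run d u (oN1 m) = oN1 m.
  move=> u; apply/eqP; apply/negPn/negP => hne.
  have [v hv] := empt _ hne.
  have := conv1 (oN1 m) (u ++ v) erefl; by rewrite run_cat hv E2 /= eqxx.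
have nz : forall q, run d w q != o0 m.
  move=> q; apply/negP => /eqP h.
  have [u hu] := reach' q; have [v hv] := reach' (oN2 m).
  apply: (suff v ((u ++ w) ++ v) (u ++ w)).
  - by apply/acc.
  - by apply/acc; rewrite !run_cat hu h.
  - by case: (u) wne => //; case: (w).
  - by [].
have nzw : forall q, run d w q != oN1 m -> q != oN1 m.
  by move=> q; apply: contra => /eqP ->; rewrite conv1'.
have hN2 : run d w (oN2 m) = oN1 m.
  apply/eqP; apply/negPn/negP => hne.
  have [v hv] := empt _ hne.
  have := conv2 (oN2 m) (w ++ v) erefl; rewrite run_cat hv E2 /= eqxx.
  by case: (w) wne.
have hd : forall j, 0 < j -> forall q : 'I_m.+3, q != o0 m ->
    run d (flatten (nseq j w)) (o0 m) != oN1 m ->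
    run d (flatten (nseq j w)) (o0 m) != run d (flatten (nseq j w)) q.
  move=> j hj q hq hne; apply/negP => /eqP heq.
  have [u hu] := reach' q; have [v hv] := empt _ hne.
  apply: (suff (flatten (nseq j w) ++ v) (u ++ (flatten (nseq j w) ++ v)) u).
  - by apply/acc; rewrite run_cat hv.
  - by apply/acc; rewrite !run_cat hu -heq hv.
  - by case: (u) hu => // hu; move: hq; rewrite -hu eqxx.
  - by [].
split.
  split.
  - by move=> q; rewrite ffunE; exact: (nz q).
  - by rewrite (imgE _ (oN1 m)) ffunE conv1'.
  - by rewrite E2 (imgE _ (oN2 m)) ffunE hN2.
  - move=> j hj.
    have -> : 0 = val (o0 m) by [].
    rewrite iter_img.
    case: (eqVneq (run d (flatten (nseq j w)) (o0 m)) (oN1 m)) => [->|hne]; first by left.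
    right => q hq; rewrite iter_img => /val_inj; apply/eqP; apply: hd => //.
    by apply/negP => /eqP hq0; move: hq; rewrite hq0.
rewrite img0 ffunE E2.
set p := run d w ord0.
have hp0 := nz (o0 m).
case: (eqVneq p (oN2 m)) => [->|hp2]; first by left; left.
case: (eqVneq p (oN1 m)) => [->|hp1]; first by left; right.
have hpq : inQM m.+3 p.
  rewrite /inQM E3; move: hp0 hp2 hp1; rewrite -!(inj_eq val_inj) /=.
  move: (ltn_ord p); rewrite /p /o0; lia.
right; split => // q hq.
have hq0 : q != o0 m by apply/negP => /eqP hq0; move: hq; rewrite hq0.
rewrite imgE ffunE.
set r := run d w q.
case: (eqVneq r (oN2 m)) => [->|hr2]; first by left.
case: (eqVneq r (oN1 m)) => [->|hr1]; first by right.
exfalso.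
have hrq : inQM m.+3 r.
  rewrite /inQM E3; move: (nz q) hr2 hr1; rewrite -!(inj_eq val_inj) /=.
  move: (ltn_ord r); rewrite /r; lia.
case: (eqVneq p r) => [hpr|hpr].
  have := hd 1 erefl q hq0.
  rewrite /= cats0 -/p -/r hpr eqxx => /(_ hr1); done.
apply: (nocol p r); split => //.
exists (trans d w); split; first by exists w.
exists q; split => //; left; split.
  by rewrite img0 ffunE.
by rewrite imgE ffunE.
Qed.

Definition Wb m (t : {ffun 'I_m.+3 -> 'I_m.+3}) : bool :=
 [&& [forall q, t q != o0 m],
     t (oN1 m) == oN1 m, t (oN2 m) == oN1 m,
     (t (o0 m) == oN1 m) || [forall q, (q != o0 m) ==> (t q != t (o0 m))]
   & [|| t (o0 m) == oN2 m, t (o0 m) == oN1 m |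
      [forall q, (q != o0 m) ==> (t q == oN2 m) || (t q == oN1 m)]]].

Lemma Wb_comp m (s t : {ffun 'I_m.+3 -> 'I_m.+3}) :
  Wb s -> Wb t -> Wb [ffun q => t (s q)].
Proof.
case/and5P=> s1 /eqP s2 /eqP s3 s4 s5; case/and5P=> /forallP t1 /eqP t2 /eqP t3 t4 t5.
have tN : forall x, (x == oN2 m) || (x == oN1 m) -> t x = oN1 m.
  by move=> x /orP[] /eqP ->.
apply/and5P; split.
- by apply/forallP => q; rewrite ffunE.
- by rewrite ffunE s2 t2.
- by rewrite ffunE s3 t2.
- rewrite !ffunE.
  case/or3P: s5 => [h|h|/forallP h].
  + by rewrite tN ?h ?eqxx ?orbT.
  + by rewrite tN ?h ?eqxx ?orbT.
  + case: eqP => //= hne; apply/forallP => q; apply/implyP => hq.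
    rewrite !ffunE tN; last exact: (implyP (h q) hq).
    by apply/eqP => E; apply: hne; rewrite -E.
- rewrite !ffunE.
  case/or3P: s5 => [h|h|/forallP h].
  + by rewrite tN ?h ?eqxx ?orbT.
  + by rewrite tN ?h ?eqxx ?orbT.
  + apply/orP; right; apply/orP; right; apply/forallP => q; apply/implyP => hq.
    by rewrite !ffunE tN ?eqxx ?orbT //; exact: (implyP (h q) hq).
Qed.

Lemma neqv m (x y : 'I_m.+3) : (x != y) = (val x != val y).
Proof. by rewrite (inj_eq val_inj). Qed.

Lemma Wb_inW m t : Wb t -> inW (n:=m.+3) t.
Proof.
case/and5P=> /forallP t1 /eqP t2 /eqP t3 t4 t5.
have tN : forall x, (x == oN2 m) || (x == oN1 m) -> t x = oN1 m.
  by move=> x /orP[] /eqP ->.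
have fixN : forall j, iter j (img t) m.+2 = m.+2.
  by elim=> //= j ->; rewrite (imgE t (oN1 m)) t2.
split; last first.
  rewrite img0 E2.
  case/or3P: t5 => [/eqP->|/eqP->|/forallP h]; first by left; left.
    by left; right.
  case: (eqVneq (t (o0 m)) (oN2 m)) => [->|h2]; first by left; left.
  case: (eqVneq (t (o0 m)) (oN1 m)) => [->|h1]; first by left; right.
  right; split.
    rewrite /inQM E3; move: (t1 (o0 m)) h2 h1; rewrite !neqv /=.
    rewrite /o0; move: (ltn_ord (t ord0)); lia.
  move=> q; rewrite /inQM E3 => hq; rewrite imgE.
  have : q != o0 m by rewrite neqv /=; lia.
  by move/(implyP (h q)) => /orP[] /eqP ->; [left|right].
split.
- by move=> q; move: (t1 q); rewrite neqv.
- by rewrite (imgE t (oN1 m)) t2.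
- by rewrite E2 (imgE t (oN2 m)) t3.
move=> [//|[|j]] _.
  rewrite /= img0.
  case/orP: t4 => [/eqP ->|/forallP h]; first by left.
  case: (eqVneq (t (o0 m)) (oN1 m)) => [->|hne]; first by left.
  right => q hq; rewrite imgE => /val_inj E.
  have : q != o0 m by rewrite neqv /=; lia.
  by move/(implyP (h q)); rewrite E eqxx.
rewrite !iterSr img0.
case/or3P: t5 => [/eqP E|/eqP E|/forallP h].
  by left; rewrite E (imgE t (oN2 m)) t3 fixN.
  by left; rewrite E (imgE t (oN1 m)) t2 fixN.
have hq : forall q : 'I_m.+3, 0 < q < m.+2 -> iter j (img t) (img t (img t q)) = m.+2.
  move=> q hq; rewrite imgE.
  have : q != o0 m by rewrite neqv /=; lia.
  by move/(implyP (h q)) => /tN; rewrite imgE => ->; rewrite fixN.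
rewrite (imgE t (t ord0)).
case: (eqVneq (iter j (img t) (val (t (t (o0 m))))) m.+2) => [E|hne]; first by left.
right => q hq2; rewrite !iterSr hq //; exact/eqP.
Qed.

Lemma inW_Wb m t : inW (n:=m.+3) t -> Wb t.
Proof.
case=> [[b1 b2 b3 b4] w].
change (img t (val (oN1 m)) = val (oN1 m)) in b2.
rewrite E2 in b3; change (img t (val (oN2 m)) = val (oN1 m)) in b3.
rewrite !imgE in b2 b3.
apply/and5P; split.
- by apply/forallP => q; rewrite neqv; exact: b1.
- by apply/eqP/val_inj.
- by apply/eqP/val_inj.
- have := b4 1 erefl; rewrite /= img0 => -[E|h].
    by apply/orP; left; apply/eqP/val_inj.
  case: (eqVneq (t (o0 m)) (oN1 m)) => //= hne.
  apply/forallP => q; apply/implyP => hq.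
  case: (eqVneq q (oN1 m)) => [->|hq1].
    by rewrite (val_inj b2) eq_sym.
  rewrite neqv eq_sym; apply/eqP; rewrite -(imgE t q); apply: h.
  by move: hq hq1; rewrite !neqv /=; move: (ltn_ord q); lia.
- move: w; rewrite img0 E2 => -[[E|E]|[hq h]].
  + by apply/orP; left; apply/eqP/val_inj.
  + by apply/orP; right; apply/orP; left; apply/eqP/val_inj.
  apply/orP; right; apply/orP; right; apply/forallP => q; apply/implyP => hq0.
  case: (eqVneq q (oN1 m)) => [->|hq1]; first by rewrite (val_inj b2) eqxx orbT.
  case: (eqVneq q (oN2 m)) => [->|hq2]; first by rewrite (val_inj b3) eqxx orbT.
  have : inQM m.+3 q.
    rewrite /inQM E3; move: hq0 hq1 hq2; rewrite !neqv /=; move: (ltn_ord q); lia.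
  move/h; rewrite imgE => -[E|E].
    by rewrite (_ : t q = oN2 m) ?eqxx //; apply: val_inj.
  by rewrite (_ : t q = oN1 m) ?eqxx ?orbT //; apply: val_inj.
Qed.

Definition Alpha m := {t : {ffun 'I_m.+3 -> 'I_m.+3} | Wb t}.
Definition mk m (t : {ffun 'I_m.+3 -> 'I_m.+3}) (h : Wb t) : Alpha m :=
  exist (fun t => Wb t) t h.
Arguments mk {m t}.
Definition dd m (a : Alpha m) : {ffun 'I_m.+3 -> 'I_m.+3} := val a.

Lemma trans_cons n (A : finType) (d : A -> {ffun 'I_n -> 'I_n}) a w :
  trans d (a :: w) = [ffun q => trans d w (d a q)].
Proof. by apply/ffunP => q; rewrite !ffunE. Qed.

Lemma trans_Wb m w : w != [::] -> Wb (trans (@dd m) w).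
Proof.
elim: w => // a [|b w] IH _.
  rewrite (_ : trans _ _ = dd a); first exact: (valP a).
  by apply/ffunP => q; rewrite ffunE.
rewrite trans_cons; apply: Wb_comp; [exact: (valP a)| exact: IH].
Qed.

Lemma runN1 m w : run (@dd m) w (oN1 m) = oN1 m.
Proof.
elim: w => // a w IH; rewrite /run /= -/(run _ w _).
by case/and5P: (valP a) => _ /eqP -> _ _ _.
Qed.

Lemma N12 m : ((oN1 m == oN2 m) = false) * ((oN2 m == oN1 m) = false).
Proof. by split; apply/negbTE; rewrite neqv /=; lia. Qed.

Definition gen m (a b : 'I_m.+3) : {ffun 'I_m.+3 -> 'I_m.+3} :=
  [ffun x => if x == a then b else oN1 m].

Lemma gen_Wb1 m q : q != o0 m -> Wb (gen (o0 m) q).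
Proof.
move=> hq; rewrite /gen; apply/and5P; split.
- by apply/forallP => x; rewrite ffunE; case: (x =P o0 m).
- by rewrite ffunE.
- by rewrite ffunE.
- rewrite ffunE eqxx; case: eqP => //= hne.
  apply/forallP => x; apply/implyP => hx; rewrite ffunE (negbTE hx).
  by apply/eqP => E; apply: hne.
- apply/orP; right; apply/orP; right.
  by apply/forallP => x; apply/implyP => hx; rewrite ffunE (negbTE hx) eqxx orbT.
Qed.

Lemma gen_Wb2 m x : x != oN2 m -> x != oN1 m -> Wb (gen x (oN2 m)).
Proof.
move=> h2 h1; rewrite /gen; apply/and5P; split.
- by apply/forallP => y; rewrite ffunE; case: (y =P x).
- by rewrite ffunE [oN1 m == x]eq_sym (negbTE h1).
- by rewrite ffunE [oN2 m == x]eq_sym (negbTE h2).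
- rewrite ffunE; case: (eqVneq (o0 m) x) => [<-|hx] /=; last by rewrite eqxx.
  apply/orP; right.
  by apply/forallP => y; apply/implyP => hy; rewrite !ffunE (negbTE hy) N12.
- apply/orP; right; apply/orP; right.
  apply/forallP => y; apply/implyP => hy; rewrite ffunE; case: (y =P x) => _; by rewrite eqxx ?orbT.
Qed.

Lemma colW m (t : {ffun 'I_m.+3 -> 'I_m.+3}) : Wb t -> inQM m.+3 (img t 0) ->
  forall r, inQM m.+3 r -> ~ inQM m.+3 (img t r).
Proof.
move=> /Wb_inW [_ W] h0 r hr; rewrite /inQM E3 in hr h0 *.
case: W => [[E|E]|[_ W]]; first by move: h0; rewrite E E2; lia.
  by move: h0; rewrite E /=; lia.
have hr' : r < m.+3 by lia.
have := W (Ordinal hr'); rewrite /inQM E3 /= => /(_ hr) [->|->] /=; rewrite ?E2; lia.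
Qed.

Lemma eqN2 m (x : 'I_m.+3) : (val x == m.+1) = (x == oN2 m).
Proof. by rewrite -val_eqE. Qed.

Lemma part1 m : exists (A : finType) (d : A -> {ffun 'I_m.+3 -> 'I_m.+3}),
  [/\ bifix_free_min_dfa d, no_colliding_pairs d & forall t, inT d t <-> inW t].
Proof.
exists (Alpha m), (@dd m).
have runN2 : forall w, w != [::] -> run (@dd m) w (oN2 m) = oN1 m.
  case=> // a w _; rewrite /run /= -/(run _ w _).
  by case/and5P: (valP a) => _ _ /eqP -> _ _; rewrite runN1.
have acc : forall u, accepts (@dd m) u <-> run (@dd m) u (o0 m) = oN2 m.
  move=> u; rewrite /accepts img0 ffunE E2; split => [h|->] //; exact: val_inj.
have run1 : forall (t : {ffun 'I_m.+3 -> 'I_m.+3}) (h : Wb t) q,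
    run (@dd m) [:: mk h] q = t q by [].
split.
- split; [split|split|split].
  + move=> q; case: (eqVneq q (o0 m)) => [->|hq]; first by exists [::]; rewrite img0 ffunE.
    exists [:: mk (gen_Wb1 hq)]; by rewrite img0 ffunE run1 ffunE eqxx.
  + move=> p q hpq; rewrite E2.
    case: (eqVneq p (oN2 m)) => [hp2|hp2].
      by exists [::]; rewrite /= !eqN2 -hp2 eqxx [q == _]eq_sym (negbTE hpq).
    case: (eqVneq q (oN2 m)) => [hq2|hq2].
      by exists [::]; rewrite /= !eqN2 -hq2 eqxx (negbTE hpq).
    case: (eqVneq p (oN1 m)) => [hp1|hp1].
      have hq1 : q != oN1 m by rewrite -hp1 eq_sym.
      exists [:: mk (gen_Wb2 hq2 hq1)].
      by rewrite !run1 !ffunE eqxx eq_sym (negbTE hpq) !eqN2 eqxx N12.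
    exists [:: mk (gen_Wb2 hp2 hp1)].
    by rewrite !run1 !ffunE eqxx [q == p]eq_sym (negbTE hpq) !eqN2 eqxx N12.
  + move=> u v x hu hv hx E; subst v; move/acc: hv; rewrite run_cat (proj1 (acc u) hu).
    by rewrite runN2 // => E; move: (N12 m).1; rewrite E eqxx.
  + move=> u v x hu hv hx E; subst v; move/acc: hv; rewrite run_cat.
    have hu' := proj1 (acc u) hu.
    have une : u != [::] by case: (u) hu'.
    have := trans_Wb une; case/and5P => _ _ _ t4 _.
    have := trans_Wb hx; case/and5P => /forallP t1 _ _ _ _.
    move: (t1 (o0 m)); rewrite ffunE => hq hv.
    move: t4; rewrite !ffunE hu' N12 /= => /forallP /(_ (run (@dd m) x (o0 m))).
    by rewrite hq /= ffunE hv eqxx.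
  + move=> q w hq; have -> : q = oN1 m by apply: val_inj.
    by rewrite runN1 E2 eqN2 N12.
  + move=> q w; rewrite E2 => hq; have -> : q = oN2 m by apply: val_inj.
    case: w => [|a w]; first by rewrite /= eqxx.
    by rewrite runN2 // eqN2 N12.
- move=> p q [hp hq _ [t [[w wne ->] [r [hr H]]]]].
  have W := trans_Wb wne.
  case: H => [[E1 E2']|[E1 E2']].
    by apply: (colW W _ hr); rewrite ?E1 ?E2'.
  by apply: (colW W _ hr); rewrite ?E1 ?E2'.
- move=> t; split.
    by case=> w wne ->; apply: Wb_inW; exact: trans_Wb.
  move/inW_Wb => h; exists [:: mk h] => //.
  by apply/ffunP => q; rewrite ffunE.
Qed.

Theorem mainTheorem6 (n : nat) (hn : 3 <= n) :
  (exists (A : finType) (d : A -> {ffun 'I_n -> 'I_n}),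
      [/\ bifix_free_min_dfa d, no_colliding_pairs d &
          forall t, inT d t <-> inW t]) /\
  (forall (A : finType) (d : A -> {ffun 'I_n -> 'I_n}),
      bifix_free_min_dfa d -> no_colliding_pairs d ->
      forall t, inT d t -> inW t).
Proof.
case: n hn => [|[|[|m]]] // _.
split; first exact: part1.
by move=> A d; exact: part2.
Qed.
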